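(* Let $n\ge1$, let $V=\bigoplus_{i=1}^{2n-1}V_i$ and $W=\bigoplus_{i=1}^{2n-1}W_i$ be arbitrary graded finite-dimensional complex vector spaces, and let $(B_h,\Gamma_i,\Delta_i)\in\Lambda^{\mathrm A_{2n-1}}(V,W)$. Define $A,B\in\mathrm{End}(V)$, $\Gamma\in\mathrm{Hom}(W,V)$, $\Delta\in\mathrm{Hom}(V,W)$ by $A=\bigoplus_{i=1}^{2n-2}B_{i+1,i}$, $B=\bigoplus_{i=1}^{2n-2}\epsilon_iB_{i,i+1}$ with $\epsilon_i=+1$ for $i<n$ and $\epsilon_i=-1$ for $i\ge n$, $\Gamma=\bigoplus_i\Gamma_i$, $\Delta=\bigoplus_i\Delta_i$. Then the elements \[X(z)=\mathrm{id}_W-\sum_{j,k\ge0}\Delta A^jB^k\Gamma\,z^{j+k+2},\qquad Y(z)=\mathrm{id}_W+\sum_{j,k\ge0}\Delta B^kA^j\Gamma\,z^{j+k+2}\] of $\mathrm{End}(W)[z]$ are inverse to each other.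
   Context: $B_{i,j}$ ($|i-j|=1$) denotes a linear map $V_j\to V_i$, $\Gamma_i:W_i\to V_i$, $\Delta_i:V_i\to W_i$. $\Lambda^{\mathrm A_{2n-1}}(V,W)$ is the set of tuples $(B_{i,j},\Gamma_i,\Delta_i)$ satisfying, with the conventions that $B_{0,1},B_{1,0},B_{2n,2n-1},B_{2n-1,2n}$ are zero: $B_{i,i+1}B_{i+1,i}-B_{i,i-1}B_{i-1,i}=\Gamma_i\Delta_i$ for $1\le i\le n-1$; $-B_{n,n-1}B_{n-1,n}-B_{n,n+1}B_{n+1,n}=\Gamma_n\Delta_n$; and $B_{i,i-1}B_{i-1,i}-B_{i,i+1}B_{i+1,i}=\Gamma_i\Delta_i$ for $n+1\le i\le 2n-1$. (These are the preprojective relations for the type $\mathrm A_{2n-1}$ quiver oriented towards the middle vertex $n$.) *)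

(* Defs.v *)
From HB Require Import structures.
From mathcomp Require Import all_boot all_order all_algebra.
From mathcomp Require Import complex reals.
Set Implicit Arguments.
Unset Strict Implicit.
Unset Printing Implicit Defensive.
Import GRing.Theory.
Local Open Scope ring_scope.

(* Conventions (1-based vertex indices 1..2n-1 of the A_{2n-1} quiver):
   V_i = F^(v i), W_i = F^(w i); linear maps are matrices acting on column
   vectors, so a map V_j -> V_i is a matrix of size (v i) x (v j).
     Bup i = B_{i,i+1} : V_{i+1} -> V_i
     Bdn i = B_{i+1,i} : V_i -> V_{i+1}
     Gam i = Gamma_i   : W_i -> V_i
     Del i = Delta_i   : V_i -> W_i
   Values of these families at indices outside the quiver are never used. *)
Section A2n1.
Variables (F : fieldType) (n : nat) (v w : nat -> nat).
Variables (Bup : forall i, 'M[F]_(v i, v i.+1))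
          (Bdn : forall i, 'M[F]_(v i.+1, v i))
          (Gam : forall i, 'M[F]_(v i, w i))
          (Del : forall i, 'M[F]_(w i, v i)).

Definition nvert : nat := (2 * n).-1.

(* B_{i,i-1} B_{i-1,i}, with B_{1,0} = B_{0,1} = 0 *)
Definition Lterm (i : nat) : 'M[F]_(v i) :=
  match i as j return 'M[F]_(v j) with
  | 0 => 0
  | k.+1 => if k is 0 then 0 else Bdn k *m Bup k
  end.

(* B_{i,i+1} B_{i+1,i}, with B_{2n-1,2n} = B_{2n,2n-1} = 0 *)
Definition Rterm (i : nat) : 'M[F]_(v i) :=
  if (i < nvert)%N then Bup i *m Bdn i else 0.

Definition in_Lambda : Prop :=
  forall i : nat, (1 <= i <= nvert)%N ->
    Gam i *m Del i =
      (if (i < n)%N then Rterm i - Lterm i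
       else if i == n then - Lterm i - Rterm i
       else Lterm i - Rterm i).

Definition Ablk (i j : nat) : 'M[F]_(v i, v j) :=
  if (i =P j.+1) is ReflectT e then castmx (congr1 v (esym e), erefl) (Bdn j)
  else 0.

Definition eps (i : nat) : F := if (i < n)%N then 1 else -1.

Definition Bblk (i j : nat) : 'M[F]_(v i, v j) :=
  if (j =P i.+1) is ReflectT e then
    castmx (erefl, congr1 v (esym e)) (eps i *: Bup i)
  else 0.

Definition Gblk (i j : nat) : 'M[F]_(v i, w j) :=
  if (j =P i) is ReflectT e then castmx (erefl, congr1 w (esym e)) (Gam i)
  else 0.

Definition Dblk (i j : nat) : 'M[F]_(w i, v j) :=
  if (j =P i) is ReflectT e then castmx (erefl, congr1 v (esym e)) (Del i)
  else 0.

Definition dimV : nat := (\sum_(i < nvert) v i.+1)%N.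
Definition dimW : nat := (\sum_(i < nvert) w i.+1)%N.

Definition bigA : 'M[F]_dimV :=
  @mxblock F nvert nvert (fun i => v i.+1) (fun j => v j.+1)
    (fun i j => Ablk i.+1 j.+1).
Definition bigB : 'M[F]_dimV :=
  @mxblock F nvert nvert (fun i => v i.+1) (fun j => v j.+1)
    (fun i j => Bblk i.+1 j.+1).
Definition bigG : 'M[F]_(dimV, dimW) :=
  @mxblock F nvert nvert (fun i => v i.+1) (fun j => w j.+1)
    (fun i j => Gblk i.+1 j.+1).
Definition bigD : 'M[F]_(dimW, dimV) :=
  @mxblock F nvert nvert (fun i => w i.+1) (fun j => v j.+1)
    (fun i j => Dblk i.+1 j.+1).

(* End(W)[z] is identified with 'M[{poly F}]_dimW.  The sums over j,k >= 0
   are truncated at 2n-1, since A^(2n-1) = B^(2n-1) = 0 (A raises and B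
   lowers the grading), so all omitted terms vanish. *)
Definition Xz : 'M[{poly F}]_dimW :=
  1 - \sum_(j < nvert) \sum_(k < nvert)
        ('X^(j + k + 2) *: map_mx polyC (bigD *m bigA ^+ j *m bigB ^+ k *m bigG)).

Definition Yz : 'M[{poly F}]_dimW :=
  1 + \sum_(j < nvert) \sum_(k < nvert)
        ('X^(j + k + 2) *: map_mx polyC (bigD *m bigB ^+ k *m bigA ^+ j *m bigG)).

End A2n1.

(* Main.v *)
Require Import Defs.
From HB Require Import structures.
From mathcomp Require Import all_boot all_order all_algebra.
From mathcomp Require Import complex reals.
From mathcomp Require Import zify.
Import GRing.Theory.
Local Open Scope ring_scope.

Lemma zl1 (V : zmodType) (o x y : V) : o + y - (x + (y - x)) = o.
Proof. by rewrite (addrC x) subrK addrK. Qed.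
Lemma zl2 (V : zmodType) (o x y : V) : o - x + (y - (y - x)) = o.
Proof. by rewrite opprB (addrC y) !subrK. Qed.

Section Key.
Variables (T : pzRingType) (m p N : nat).

Lemma telesL (a : 'M[T]_m) : (1 - a) * (\sum_(j < N) a ^+ j) = 1 - a ^+ N.
Proof.
elim: N => [|k IH]; first by rewrite big_ord0 mulr0 expr0 subrr.
rewrite big_ord_recr /= mulrDr IH mulrBl mul1r -exprS.
by rewrite addrA subrK.
Qed.

Lemma telesR (a : 'M[T]_m) : (\sum_(j < N) a ^+ j) * (1 - a) = 1 - a ^+ N.
Proof.
elim: N => [|k IH]; first by rewrite big_ord0 mul0r expr0 subrr.
rewrite big_ord_recr /= mulrDl IH mulrBr mulr1 -exprSr.
by rewrite addrA subrK.
Qed.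

Lemma commQP (a b : 'M[T]_m) : (1 - b) * (1 - a) - (1 - a) * (1 - b) = b * a - a * b.
Proof.
have E1 : (1 - b) * (1 - a) = 1 - a - b + b * a.
  by rewrite mulrBl !mulrBr !mul1r !mulr1 opprB addrA [LHS]addrAC.
have E2 : (1 - a) * (1 - b) = 1 - a - b + a * b.
  by rewrite mulrBl !mulrBr !mul1r !mulr1 opprB addrA [LHS]addrAC (addrAC 1 (-b)).
by rewrite E1 E2 opprD addrACA subrr add0r.
Qed.

Lemma key (a b : 'M[T]_m) (g : 'M[T]_(m,p)) (d : 'M[T]_(p,m)) :
  a ^+ N = 0 -> b ^+ N = 0 -> b * a - a * b = g *m d ->
  let X := 1 - \sum_(j < N) \sum_(k < N) d *m (a ^+ j * b ^+ k) *m g in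
  let Y := 1 + \sum_(j < N) \sum_(k < N) d *m (b ^+ k * a ^+ j) *m g in
  X * Y = 1 /\ Y * X = 1.
Proof.
move=> aN bN com X Y.
set Sa := \sum_(j < N) a ^+ j; set Sb := \sum_(j < N) b ^+ j.
have Pa : (1 - a) * Sa = 1 by rewrite telesL aN subr0.
have aP : Sa * (1 - a) = 1 by rewrite telesR aN subr0.
have Qb : (1 - b) * Sb = 1 by rewrite telesL bN subr0.
have bQ : Sb * (1 - b) = 1 by rewrite telesR bN subr0.
have EX : \sum_(j < N) \sum_(k < N) d *m (a ^+ j * b ^+ k) *m g = d *m (Sa * Sb) *m g.
  rewrite mulr_suml mulmx_sumr mulmx_suml; apply: eq_bigr => j _.
  by rewrite mulr_sumr mulmx_sumr mulmx_suml.
have EY : \sum_(j < N) \sum_(k < N) d *m (b ^+ k * a ^+ j) *m g = d *m (Sb * Sa) *m g.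
  rewrite exchange_big /= mulr_suml mulmx_sumr mulmx_suml; apply: eq_bigr => j _.
  by rewrite mulr_sumr mulmx_sumr mulmx_suml.
have K1 : (Sa * Sb) * (g *m d) * (Sb * Sa) = Sb * Sa - Sa * Sb.
  rewrite -com -commQP mulrBr mulrBl !mulrA.
  rewrite -(mulrA Sa Sb) bQ mulr1 aP mul1r.
  by rewrite -(mulrA _ (1 - b) Sb) Qb mulr1 -mulrA Pa mulr1.
have K2 : (Sb * Sa) * (g *m d) * (Sa * Sb) = Sb * Sa - Sa * Sb.
  rewrite -com -commQP mulrBr mulrBl !mulrA.
  rewrite -(mulrA _ (1 - a) Sa) Pa mulr1 -mulrA Qb mulr1.
  by rewrite -(mulrA Sb Sa) aP mulr1 bQ mul1r.
have H1 : (d *m (Sa * Sb) *m g) * (d *m (Sb * Sa) *m g) =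
          d *m (Sb * Sa) *m g - d *m (Sa * Sb) *m g.
  by rewrite -mulmxBl -mulmxBr -K1 -!mulmxE !mulmxA.
have H2 : (d *m (Sb * Sa) *m g) * (d *m (Sa * Sb) *m g) =
          d *m (Sb * Sa) *m g - d *m (Sa * Sb) *m g.
  by rewrite -mulmxBl -mulmxBr -K2 -!mulmxE !mulmxA.
rewrite /X /Y EX EY; split.
  by rewrite mulrBl !mulrDr !mul1r mulr1 H1 zl1.
by rewrite mulrDl !mulrBr !mul1r mulr1 H2 zl2.
Qed.
End Key.


Section Blocks.
Variables (F : fieldType) (n : nat) (v w : nat -> nat).
Variables (Bup : forall i, 'M[F]_(v i, v i.+1))
          (Bdn : forall i, 'M[F]_(v i.+1, v i))
          (Gam : forall i, 'M[F]_(v i, w i))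
          (Del : forall i, 'M[F]_(w i, v i)).

Lemma AblkE j : Ablk Bdn j.+1 j = Bdn j.
Proof. by rewrite /Ablk; case: eqP => [e|ne]; [rewrite castmx_id | case: ne]. Qed.
Lemma AblkN i j : i != j.+1 -> Ablk Bdn i j = 0.
Proof. by move=> ne; rewrite /Ablk; case: eqP => // e; rewrite e eqxx in ne. Qed.
Lemma BblkE i : Bblk n Bup i i.+1 = eps F n i *: Bup i.
Proof. by rewrite /Bblk; case: eqP => [e|ne]; [rewrite castmx_id | case: ne]. Qed.
Lemma BblkN i j : j != i.+1 -> Bblk n Bup i j = 0.
Proof. by move=> ne; rewrite /Bblk; case: eqP => // e; rewrite e eqxx in ne. Qed.
Lemma GblkE i : Gblk Gam i i = Gam i.
Proof. by rewrite /Gblk; case: eqP => [e|ne]; [rewrite castmx_id | case: ne]. Qed.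
Lemma GblkN i j : j != i -> Gblk Gam i j = 0.
Proof. by move=> ne; rewrite /Gblk; case: eqP => // e; rewrite e eqxx in ne. Qed.
Lemma DblkE i : Dblk Del i i = Del i.
Proof. by rewrite /Dblk; case: eqP => [e|ne]; [rewrite castmx_id | case: ne]. Qed.
Lemma DblkN i j : j != i -> Dblk Del i j = 0.
Proof. by move=> ne; rewrite /Dblk; case: eqP => // e; rewrite e eqxx in ne. Qed.


Lemma sum_single {T : nmodType} {M : nat} {f : 'I_M -> T} (j0 : 'I_M) :
  (forall j, j != j0 -> f j = 0) -> \sum_(j < M) f j = f j0.
Proof. by move=> H; rewrite (bigD1 j0) //= big1 ?addr0 // => j /H. Qed.

Local Notation N := (nvert n).

Lemma BAdiag (i : 'I_N) :
  \sum_(j < N) Bblk n Bup i.+1 j.+1 *m Ablk Bdn j.+1 i.+1 =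
  eps F n i.+1 *: Rterm n Bup Bdn i.+1.
Proof.
rewrite /Rterm; case: ltnP => h.
  rewrite (sum_single (Ordinal h)) /= ?BblkE ?AblkE ?scalemxAl //.
  move=> j ne; rewrite BblkN ?mul0mx // eqSS; exact: ne.
rewrite scaler0 big1 // => j _; rewrite BblkN ?mul0mx //.
by rewrite eqSS neq_ltn (leq_trans (ltn_ord j) h).
Qed.

Lemma ABdiag (i : 'I_N) :
  \sum_(j < N) Ablk Bdn i.+1 j.+1 *m Bblk n Bup j.+1 i.+1 =
  eps F n i *: Lterm Bup Bdn i.+1.
Proof.
case: i => [[|i] hi] /=.
  by rewrite scaler0 big1 // => j _; rewrite AblkN ?mul0mx.
have hi' : (i < N)%N by apply: ltnW.
rewrite (sum_single (Ordinal hi')) /= ?BblkE ?AblkE ?scalemxAr //.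
move=> j ne; rewrite AblkN ?mul0mx // eqSS; rewrite eq_sym; exact: ne.
Qed.

Lemma GDdiag (i : 'I_N) :
  \sum_(j < N) Gblk Gam i.+1 j.+1 *m Dblk Del j.+1 i.+1 = Gam i.+1 *m Del i.+1.
Proof.
rewrite (sum_single i) /= ?GblkE ?DblkE //.
move=> j ne; rewrite GblkN ?mul0mx // eqSS; exact: ne.
Qed.

Lemma commBA : in_Lambda n Bup Bdn Gam Del ->
  bigB n Bup *m bigA n Bdn - bigA n Bdn *m bigB n Bup = bigG n Gam *m bigD n Del.
Proof.
move=> hL; rewrite /bigA /bigB /bigG /bigD !mul_mxblock -mxblockB.
apply: eq_mxblock => i k; case: (eqVneq i k) => [<-|ne].
  rewrite BAdiag ABdiag GDdiag hL; last by rewrite ltnS ltn_ord.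
  rewrite /eps; case: (ltnP i.+1 n) => h1.
    by rewrite ltnW // !scale1r.
  case: eqP => [e|ne].
    have hi : (i < n)%N by lia.
    by rewrite hi scaleN1r scale1r addrC.
  have h2 : (n <= i)%N by lia.
  by rewrite ltnNge h2 /= !scaleN1r opprK addrC.
have ne' : (i.+1 != k.+1)%N by rewrite eqSS; exact: ne.
rewrite !big1 ?subr0 // => j _.
- case: (eqVneq j.+1 i.+1) => [e|nj]; last by rewrite GblkN ?mul0mx.
  by rewrite DblkN ?mulmx0 //; lia.
- case: (eqVneq i.+1 j.+2) => [e|nj]; last by rewrite AblkN ?mul0mx.
  by rewrite BblkN ?mulmx0 //; lia.
- case: (eqVneq j.+1 i.+2) => [e|nj]; last by rewrite BblkN ?mul0mx.
  by rewrite AblkN ?mulmx0 //; lia.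
Qed.

Local Notation vv := (fun i : 'I_N => v i.+1).
Local Notation SB P i j := (@submxblock F N N vv vv P i j).

Lemma Astep k (P : 'M[F]_(dimV n v)) :
  (forall i j : 'I_N, (nat_of_ord i != nat_of_ord j + k.+1)%N -> SB P i j = 0) ->
  forall i j : 'I_N, (nat_of_ord i != nat_of_ord j + k.+2)%N -> SB (P *m bigA n Bdn) i j = 0.
Proof.
move=> IH i j hij; rewrite -(@submxblockK _ _ _ vv vv P) /bigA mul_mxblock mxblockK.
rewrite big1 // => l _.
case: (eqVneq (nat_of_ord l) (i - k.+1)%N) => [e|ne].
  rewrite AblkN ?mulmx0 //. lia.
case: (eqVneq (nat_of_ord i) (l + k.+1)%N) => [e|ne2]; first by lia.
by rewrite IH ?mul0mx.
Qed.

Lemma Bstep k (P : 'M[F]_(dimV n v)) :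
  (forall i j : 'I_N, (nat_of_ord j != nat_of_ord i + k.+1)%N -> SB P i j = 0) ->
  forall i j : 'I_N, (nat_of_ord j != nat_of_ord i + k.+2)%N -> SB (P *m bigB n Bup) i j = 0.
Proof.
move=> IH i j hij; rewrite -(@submxblockK _ _ _ vv vv P) /bigB mul_mxblock mxblockK.
rewrite big1 // => l _.
case: (eqVneq (nat_of_ord l) (i + k.+1)%N) => [e|ne]; last by rewrite IH ?mul0mx.
rewrite BblkN ?mulmx0 //; lia.
Qed.

Lemma Apow k : forall i j : 'I_N, (nat_of_ord i != nat_of_ord j + k.+1)%N -> SB (bigA n Bdn ^+ k.+1) i j = 0.
Proof.
elim: k => [|k IH] i j hij.
  by rewrite expr1 /bigA mxblockK AblkN //; lia.
by rewrite exprSr -mulmxE; apply: (Astep _ _ IH).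
Qed.

Lemma Bpow k : forall i j : 'I_N, (nat_of_ord j != nat_of_ord i + k.+1)%N -> SB (bigB n Bup ^+ k.+1) i j = 0.
Proof.
elim: k => [|k IH] i j hij.
  by rewrite expr1 /bigB mxblockK BblkN //; lia.
by rewrite exprSr -mulmxE; apply: (Bstep _ _ IH).
Qed.

Lemma Anil : (0 < n)%N -> bigA n Bdn ^+ N = 0.
Proof.
move=> hn; have hN : (0 < N)%N by rewrite /nvert; lia.
have -> : bigA n Bdn ^+ N = bigA n Bdn ^+ N.-1.+1 by rewrite prednK.
apply/(@mxblockP _ _ _ vv vv) => i j; rewrite submxblock0 Apow //.
have := ltn_ord i; lia.
Qed.

Lemma Bnil : (0 < n)%N -> bigB n Bup ^+ N = 0.
Proof.
move=> hn; have hN : (0 < N)%N by rewrite /nvert; lia.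
have -> : bigB n Bup ^+ N = bigB n Bup ^+ N.-1.+1 by rewrite prednK.
apply/(@mxblockP _ _ _ vv vv) => i j; rewrite submxblock0 Bpow //.
have := ltn_ord j; lia.
Qed.

End Blocks.

Lemma scale_exp (T : comPzRingType) m (c : T) (x : 'M[T]_m) k :
  (c *: x) ^+ k = c ^+ k *: x ^+ k.
Proof.
elim: k => [|k IH]; first by rewrite !expr0 scale1r.
by rewrite !exprSr IH -!mulmxE -scalemxAl -scalemxAr scalerA.
Qed.

Lemma scale_mul (T : comPzRingType) m (c c' : T) (x y : 'M[T]_m) :
  (c *: x) * (c' *: y) = (c * c') *: (x * y).
Proof. by rewrite -!mulmxE -scalemxAl -scalemxAr scalerA. Qed.

Theorem lemma4p10 (R : realType) (n : nat) (hn : (1 <= n)%N)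
  (v w : nat -> nat)
  (Bup : forall i, 'M[R[i]]_(v i, v i.+1))
  (Bdn : forall i, 'M[R[i]]_(v i.+1, v i))
  (Gam : forall i, 'M[R[i]]_(v i, w i))
  (Del : forall i, 'M[R[i]]_(w i, v i)) :
  in_Lambda n Bup Bdn Gam Del ->
  Xz n Bup Bdn Gam Del * Yz n Bup Bdn Gam Del = 1 /\
  Yz n Bup Bdn Gam Del * Xz n Bup Bdn Gam Del = 1.
Proof.
move=> hL.
pose mA := map_mx (@polyC R[i]) (bigA n Bdn).
pose mB := map_mx (@polyC R[i]) (bigB n Bup).
pose a := 'X *: mA.
pose b := 'X *: mB.
pose g := 'X ^+ 2 *: map_mx (@polyC R[i]) (bigG n Gam).
pose d := map_mx (@polyC R[i]) (bigD n Del).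
have aN : a ^+ nvert n = 0.
  by rewrite /a scale_exp /mA -rmorphXn Anil // rmorph0 scaler0.
have bN : b ^+ nvert n = 0.
  by rewrite /b scale_exp /mB -rmorphXn Bnil // rmorph0 scaler0.
have com : b * a - a * b = g *m d.
  rewrite /a /b !scale_mul mulrC -scalerBr /mA /mB -!mulmxE -!map_mxM -map_mxB.
  by rewrite (commBA _ _ _ _ _ _ _ _ hL) map_mxM -expr2 scalemxAl.
have := key _ _ _ _ _ _ _ _ aN bN com => /= [[H1 H2]].
have EX : Xz n Bup Bdn Gam Del =
  1 - \sum_(j < nvert n) \sum_(k < nvert n) d *m (a ^+ j * b ^+ k) *m g.
  rewrite /Xz; congr (_ - _); apply: eq_bigr => j _; apply: eq_bigr => k _.
  rewrite /a /b /g /d !scale_exp /mA /mB !map_mxM !rmorphXn.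
  rewrite -!mulmxE -!scalemxAl -!scalemxAr -!scalemxAl !scalerA -!exprD  !mulmxA.
  by rewrite (_ : (2 + j + k = j + k + 2)%N) //; lia.
have EY : Yz n Bup Bdn Gam Del =
  1 + \sum_(j < nvert n) \sum_(k < nvert n) d *m (b ^+ k * a ^+ j) *m g.
  rewrite /Yz; congr (_ + _); apply: eq_bigr => j _; apply: eq_bigr => k _.
  rewrite /a /b /g /d !scale_exp /mA /mB !map_mxM !rmorphXn.
  rewrite -!mulmxE -!scalemxAl -!scalemxAr -!scalemxAl !scalerA -!exprD !mulmxA.
  by rewrite (_ : (2 + k + j = j + k + 2)%N) //; lia.
by rewrite EX EY.
Qed.
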